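(* Let $L,M,N\in\mathbb N$ and $S=\{m/N^{L+M}: m=1,\dots,N^{L+M}-1\}$. Let $\vec B_L$ be a binary digit vector of length $N^L$ and $\vec B_M$ a binary digit vector of length $N^M$. Then $F_{\vec B_L}(x)=F_{\vec B_M}(x)$ for all $x\in S$ if and only if $F_{\vec B_L}=F_{\vec B_M}$.
   Context: A binary digit vector of length (scale factor) $K\ge3$ is $\vec B=(b_0,\dots,b_{K-1})\in\{0,1\}^K$ with $2\le\|\vec B\|:=\sum_i b_i\le K-1$; its digit set is $D=\{i:b_i=1\}$. With $\phi_d(x)=(x+d)/K$ for $d\in D$, let $\mu_{\vec B}$ be the unique Borel probability measure with $\mu_{\vec B}=\frac{1}{\|\vec B\|}\sum_{d\in D}\mu_{\vec B}\circ\phi_d^{-1}$, supported on the attractor $C_{\vec B}\subset[0,1]$. The CDF is $F_{\vec B}(x)=\mu_{\vec B}([0,x])$, $x\in[0,1]$. *)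

(* Defs.v *)
From HB Require Import structures.
From mathcomp Require Import all_boot all_order all_algebra.
From mathcomp Require Import all_classical all_reals all_analysis.
Set Implicit Arguments. Unset Strict Implicit. Unset Printing Implicit Defensive.
Import Order.TTheory GRing.Theory Num.Theory.
Local Open Scope classical_set_scope.
Local Open Scope ring_scope.

Definition digit_vector (K : nat) (B : seq bool) : bool :=
  [&& (3 <= K)%N, size B == K, (2 <= count id B)%N & (count id B <= K.-1)%N].

Definition phi {R : realType} (K d : nat) (x : R) : R := (x + d%:R) / K%:R.

Definition selfsim {R : realType} (K : nat) (B : seq bool)
  (mu : probability R R) : Prop :=
  forall A : set R, measurable A ->
    (mu A = ((count id B)%:R^-1)%:E *
           \sum_(d < K | nth false B d) mu (phi K d @^-1` A))%E.

Definition cdfB {R : realType} (mu : probability R R) (x : R) : \bar R :=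
  mu [set` `[0, x]].

(* Main.v *)
Require Import Defs.
From HB Require Import structures.
From mathcomp Require Import all_boot all_order all_algebra.
From mathcomp Require Import all_classical all_reals all_analysis.
From mathcomp Require Import ring lra zify.
Import Order.TTheory GRing.Theory Num.Theory.
Local Open Scope ring_scope.
Local Open Scope classical_set_scope.

Definition G {R : realType} (mu : probability R R) (x : R) : R := fine (mu `]-oo, x]).

Lemma GE (R : realType) (mu : probability R R) x : mu `]-oo, x] = (G mu x)%:E.
Proof. by rewrite /G fineK // fin_num_measure. Qed.

Lemma fe (R : realType) K B (mu : probability R R) (x : R) : (0 < K)%N ->
  selfsim K B mu ->
  G mu x = (count id B)%:R^-1 * \sum_(d < K | nth false B d) G mu (K%:R * x - d%:R).
Proof.
move=> K0 hs.
have := hs `]-oo, x] ltac:(done).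
have Kp : (0:R) < K%:R by rewrite ltr0n.
have pre : forall d : nat, phi K d @^-1` `]-oo, x] = `]-oo, K%:R * x - d%:R] :> set R.
  move=> d; apply/seteqP; split => y /=; rewrite !in_itv /= /phi ler_pdivrMr //.
  - by rewrite lerBrDr mulrC.
  - by rewrite lerBrDr mulrC.
under eq_bigr do rewrite pre GE.
by rewrite GE sumEFin -EFinM => -[].
Qed.

Definition idTR (R : realType) : R -> R := idfun.
HB.instance Definition _ (R : realType) :=
  @isMeasurableFun.Build _ _ _ _ (@idTR R) (@measurable_id _ _ setT).

Lemma G_ge0 (R : realType) (mu : probability R R) x : 0 <= G mu x.
Proof. by rewrite -lee_fin -GE. Qed.
Lemma G_le1 (R : realType) (mu : probability R R) x : G mu x <= 1.
Proof. by rewrite -lee_fin -GE probability_le1. Qed.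
Lemma G_mono (R : realType) (mu : probability R R) x y : x <= y -> G mu x <= G mu y.
Proof.
move=> xy; rewrite -lee_fin -!GE; apply: le_measure; rewrite ?inE //.
by apply: subitvPr; rewrite bnd_simp.
Qed.

Lemma lowlim (R : realType) (mu : probability R R) (e : R) : 0 < e ->
  exists T : R, forall t, t <= T -> G mu t < e.
Proof.
move=> e0.
have := cvg_cdfNy0 (idTR R : {RV mu >-> R}).
move/fine_cvgP => [_ /cvgrPdist_lt /(_ e e0)] [M [Mr HM]].
exists (M - 1) => t tM.
have /HM : t < M by apply: (le_lt_trans tM); rewrite ltrBlDr ltrDl.
have -> : (fine \o cdf (idTR R : {RV mu >-> R})) t = G mu t by [].
by rewrite sub0r normrN ger0_norm ?G_ge0.
Qed.

Lemma uplim (R : realType) (mu : probability R R) (e : R) : 0 < e ->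
  exists T : R, forall t, T <= t -> 1 - e < G mu t.
Proof.
move=> e0.
have := cvg_cdfy1 (idTR R : {RV mu >-> R}).
move/fine_cvgP => [_ /cvgrPdist_lt /(_ e e0)] [M [Mr HM]].
exists (M + 1) => t tM.
have /HM : M < t by apply: (lt_le_trans _ tM); rewrite ltrDl.
have -> : (fine \o cdf (idTR R : {RV mu >-> R})) t = G mu t by [].
rewrite ger0_norm ?subr_ge0 ?G_le1 // => h.
by rewrite ltrBlDr addrC -ltrBlDr.
Qed.

Lemma cnt (R : nzRingType) K (B : seq bool) : size B = K ->
  \sum_(d < K | nth false B d) (1 : R) = (count id B)%:R.
Proof.
move=> <-.
rewrite -sum1_count (big_nth false) big_mkord natr_sum.
by apply: eq_bigr.
Qed.

Lemma bigpow (R : realType) K (c : R) : (1 < K)%N -> exists n, c < K%:R ^+ n.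
Proof.
move=> K1; exists (Num.trunc c).+1.
apply: (lt_trans (truncnS_gt c)).
by rewrite -natrX ltr_nat ltn_expl.
Qed.

Definition good {R : realType} K B (mu : probability R R) :=
  [/\ (2 <= K)%N, size B = K, (2 <= count id B)%N & selfsim K B mu].

Lemma G_le_K (R : realType) K B (mu : probability R R) y : good K B mu ->
  G mu y <= G mu (K%:R * y).
Proof.
case=> K2 sz S2 hs.
have S0 : (0:R) < (count id B)%:R by rewrite ltr0n; apply: leq_trans S2.
rewrite (@fe R K B mu y _ hs); last by apply: leq_trans K2.
rewrite ler_pdivrMl // mulrC.
rewrite -[X in _ <= X * _](@cnt R K B sz) mulr_suml.
apply: ler_sum => d _; rewrite mul1r; apply: G_mono.
by rewrite lerBlDr lerDl.
Qed.

Lemma G_ge_K (R : realType) K B (mu : probability R R) y : good K B mu ->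
  G mu (K%:R * (y - 1) + 1) <= G mu y.
Proof.
case=> K2 sz S2 hs.
have S0 : (0:R) < (count id B)%:R by rewrite ltr0n; apply: leq_trans S2.
rewrite (@fe R K B mu y _ hs); last by apply: leq_trans K2.
rewrite ler_pdivlMl // mulrC.
rewrite -[X in _ * X <= _](@cnt R K B sz) mulr_sumr.
apply: ler_sum => d _; rewrite mulr1; apply: G_mono.
have h : (d%:R + 1 : R) <= K%:R by rewrite natr1 ler_nat ltn_ord.
by rewrite mulrBr mulr1; lra.
Qed.

Lemma G_neg {R : realType} {K B} {mu : probability R R} y : good K B mu ->
  y < 0 -> G mu y = 0.
Proof.
move=> hg y0; have [K2 _ _ _] := hg.
apply/eqP; rewrite eq_le G_ge0 andbT; apply/ler_addgt0Pr => e e0; rewrite add0r.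
have [T hT] := @lowlim R mu e e0.
have iter : forall n, G mu y <= G mu (K%:R ^+ n * y).
  elim=> [|n IH]; first by rewrite expr0 mul1r.
  by apply: (le_trans IH); rewrite exprS -mulrA; exact: (@G_le_K R K B mu _ hg).
have [n hn] := @bigpow R K (T / y) K2.
rewrite -(ltr_nM2r y0) divfK ?lt_eqF // in hn.
by apply: (le_trans (iter n)); apply/ltW/hT/ltW.
Qed.

Lemma G_big {R : realType} {K B} {mu : probability R R} y : good K B mu ->
  1 < y -> G mu y = 1.
Proof.
move=> hg y1; have [K2 _ _ _] := hg.
apply/eqP; rewrite eq_le G_le1 /=; apply/ler_addgt0Pr => e e0.
have [T hT] := @uplim R mu e e0.
have iter : forall n, G mu (K%:R ^+ n * (y - 1) + 1) <= G mu y.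
  elim=> [|n IH]; first by rewrite expr0 mul1r subrK.
  apply: le_trans IH.
  have -> : K%:R ^+ n.+1 * (y - 1) + 1 = K%:R * ((K%:R ^+ n * (y - 1) + 1) - 1) + 1.
    by rewrite exprS; ring.
  exact: (@G_ge_K R K B mu _ hg).
have [n hn] := @bigpow R K ((T - 1) / (y - 1)) K2.
have y10 : 0 < y - 1 by rewrite subr_gt0.
rewrite -(ltr_pM2r y10) divfK ?gt_eqF // in hn.
have := hT (K%:R ^+ n * (y - 1) + 1) ltac:(lra).
have := iter n; lra.
Qed.

Lemma Gn_ge1 {R : realType} {K B} {mu : probability R R} : good K B mu ->
  exists K', K = K'.+1.
Proof. by case=> K2 _ _ _; exists K.-1; rewrite prednK // ltnW. Qed.

Lemma G_0 {R : realType} {K B} {mu : probability R R} : good K B mu ->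
  G mu 0 = 0.
Proof.
move=> hg; have [K2 sz S2 hs] := hg.
have S0 : (2:R) <= (count id B)%:R by rewrite ler_nat.
have h : \sum_(d < K | nth false B d) G mu (K%:R * 0 - d%:R) <= G mu 0.
  apply: (@le_trans _ _ (\sum_(d < K) G mu (K%:R * 0 - d%:R))).
    rewrite big_mkcond /=; apply: ler_sum => d _.
    by case: ifP => _ //; apply: G_ge0.
  have [K' eK] := Gn_ge1 hg.
  rewrite eK big_ord_recl /= mulr0 sub0r oppr0 big1 ?addr0 // => i _.
  by apply: (G_neg _ hg); rewrite sub0r oppr_lt0 ltr0n /bump.
have e : G mu 0 = (count id B)%:R^-1 * \sum_(d < K | nth false B d) G mu (K%:R * 0 - d%:R).
  by apply: fe => //; apply: leq_trans K2.
set g := G mu 0 in h e *.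
have g0 : 0 <= g by apply: G_ge0.
set S := (count id B)%:R in S0 e *.
have hSi : S^-1 <= 2^-1 by rewrite lef_pV2 ?posrE //; lra.
have h1 : g <= S^-1 * g by rewrite {1}e; apply: ler_wpM2l => //; rewrite invr_ge0; lra.
have h2 : S^-1 * g <= 2^-1 * g by apply: ler_wpM2r.
lra.
Qed.

Lemma G_1 {R : realType} {K B} {mu : probability R R} : good K B mu ->
  G mu 1 = 1.
Proof.
move=> hg; have [K2 sz S2 hs] := hg.
have S0 : (2:R) <= (count id B)%:R by rewrite ler_nat.
have e : G mu 1 = (count id B)%:R^-1 * \sum_(d < K | nth false B d) G mu (K%:R * 1 - d%:R).
  by apply: fe => //; apply: leq_trans K2.
have e1 : 1 = (count id B)%:R^-1 * \sum_(d < K | nth false B d) (1 : R).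
  by rewrite (@cnt R K B sz) mulVf // gt_eqF //; lra.
have eu : 1 - G mu 1 = (count id B)%:R^-1 *
   \sum_(d < K | nth false B d) (1 - G mu (K%:R * 1 - d%:R)).
  by rewrite sumrB mulrBr -e -e1.
have h : \sum_(d < K | nth false B d) (1 - G mu (K%:R * 1 - d%:R)) <= 1 - G mu 1.
  apply: (@le_trans _ _ (\sum_(d < K) (1 - G mu (K%:R * 1 - d%:R)))).
    rewrite big_mkcond /=; apply: ler_sum => d _.
    by case: ifP => _ //; rewrite subr_ge0 G_le1.
  have [K' eK] := Gn_ge1 hg.
  rewrite eK big_ord_recr /= big1 ?add0r.
    by rewrite mulr1 -natr1 addrAC subrr add0r.
  move=> i _; rewrite (G_big _ hg) ?subrr // mulr1 -natr1.
  have : (i%:R : R) + 1 <= K'%:R by rewrite natr1 ler_nat ltn_ord.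
  lra.
set g := 1 - G mu 1 in h eu *.
have g0 : 0 <= g by rewrite /g subr_ge0 G_le1.
set S := (count id B)%:R in S0 eu *.
have hSi : S^-1 <= 2^-1 by rewrite lef_pV2 ?posrE //; lra.
have h1 : g <= S^-1 * g by rewrite {1}eu; apply: ler_wpM2l => //; rewrite invr_ge0; lra.
have h2 : S^-1 * g <= 2^-1 * g by apply: ler_wpM2r.
have : g = 0 by lra.
rewrite /g; lra.
Qed.

Lemma G_le0 {R : realType} {K B} {mu : probability R R} y : good K B mu ->
  y <= 0 -> G mu y = 0.
Proof.
move=> hg; rewrite le_eqVlt => /orP[/eqP -> |]; first exact: G_0 hg.
exact: G_neg _ hg.
Qed.

Lemma G_ge1 {R : realType} {K B} {mu : probability R R} y : good K B mu ->
  1 <= y -> G mu y = 1.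
Proof.
move=> hg; rewrite le_eqVlt => /orP[/eqP <- |]; first exact: G_1 hg.
exact: G_big _ hg.
Qed.

Definition aC {R : realType} K B j : R :=
  (count id B)%:R^-1 * \sum_(d < K | nth false B d && (d < j)%N) 1.
Definition bC {R : realType} K B j : R :=
  (count id B)%:R^-1 * \sum_(d < K | nth false B d) (d == j :> nat)%:R.

Lemma cell {R : realType} {K B} {mu : probability R R} j x : good K B mu ->
  (j < K)%N -> j%:R <= K%:R * x <= j%:R + 1 ->
  G mu x = aC K B j + bC K B j * G mu (K%:R * x - j%:R).
Proof.
move=> hg jK /andP[x1 x2]; have [K2 sz S2 hs] := hg.
rewrite (@fe R K B mu x _ hs); last by apply: leq_trans K2.
have h : forall d : 'I_K, G mu (K%:R * x - d%:R) =
    (d < j)%N%:R + (d == j :> nat)%:R * G mu (K%:R * x - j%:R).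
  move=> d; case: (ltngtP d j) => [dj|jd|->]; rewrite /= ?mul0r ?mul1r ?addr0 ?add0r //.
  - apply: (G_ge1 _ hg).
    have : (d%:R : R) + 1 <= j%:R by rewrite natr1 ler_nat.
    lra.
  - apply: (G_le0 _ hg).
    have : (j%:R : R) + 1 <= d%:R by rewrite natr1 ler_nat.
    lra.
under eq_bigr do rewrite h.
rewrite big_split /= -mulr_suml mulrDr mulrA /aC /bC; congr (_ * _ + _).
rewrite big_mkcondr; apply: eq_bigr => d _.
by case: (d < j)%N.
Qed.

Lemma cellpt {R : realType} {K B} {mu : probability R R} j u : good K B mu ->
  (j < K)%N -> 0 <= u <= 1 ->
  G mu ((j%:R + u) / K%:R) = aC K B j + bC K B j * G mu u.
Proof.
move=> hg jK /andP[u0 u1]; have [K2 _ _ _] := hg.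
have K0 : (K%:R : R) != 0 by rewrite pnatr_eq0 -lt0n; apply: leq_trans K2.
have e : K%:R * ((j%:R + u) / K%:R) = j%:R + u by rewrite mulrC divfK.
have e2 : j%:R + u - j%:R = u by lra.
rewrite (cell _ _ hg jK) e ?e2 //.
apply/andP; split; lra.
Qed.

Lemma bC_ge0 {R : realType} K B j : 0 <= bC K B j :> R.
Proof.
rewrite /bC; apply: mulr_ge0; first by rewrite invr_ge0 ler0n.
by apply: sumr_ge0 => d _; rewrite ler0n.
Qed.

Lemma bC_le {R : realType} {K B} {mu : probability R R} j : good K B mu ->
  (j < K)%N -> bC K B j <= 2^-1 :> R.
Proof.
move=> hg jK; have [K2 sz S2 hs] := hg.
have S0 : (2:R) <= (count id B)%:R by rewrite ler_nat.
have hSi : (count id B)%:R^-1 <= 2^-1 :> R by rewrite lef_pV2 ?posrE //; lra.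
have hs1 : \sum_(d < K | nth false B d) (d == j :> nat)%:R <= 1 :> R.
  apply: (@le_trans _ _ (\sum_(d < K) (d == j :> nat)%:R)).
    rewrite big_mkcond /=; apply: ler_sum => d _.
    by case: ifP => _ //; rewrite ler0n.
  rewrite (bigD1 (Ordinal jK)) //= eqxx big1 ?addr0 // => d hd.
  have : (d : nat) != j by apply: contraNneq hd => e; apply/eqP/val_inj.
  by move/negbTE ->.
rewrite /bC; apply: (le_trans (ler_wpM2l _ hs1)); first by rewrite invr_ge0 ler0n.
by rewrite mulr1.
Qed.

Lemma incr {R : realType} {K B} {mu : probability R R} : good K B mu ->
  forall n i, (i < K ^ n)%N ->
  G mu (i.+1%:R / (K ^ n)%:R) - G mu (i%:R / (K ^ n)%:R) <= 2^-1 ^+ n.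
Proof.
move=> hg; have [K2 _ _ _] := hg.
have K0 : (0 < K)%N by apply: leq_trans K2.
elim=> [|n IH] i hi.
  rewrite expn0 ltnS leqn0 in hi; rewrite (eqP hi) expn0 !divr1 (G_1 hg) (G_0 hg).
  by rewrite subr0 expr0.
have k0 : (0 < K ^ n)%N by rewrite expn_gt0 K0.
set k := (K ^ n)%N in k0 IH.
have jK : (i %/ k < K)%N by rewrite ltn_divLR // /k -expnS.
have i'k : (i %% k < k)%N by rewrite ltn_pmod.
have kR : (k%:R : R) != 0 by rewrite pnatr_eq0 -lt0n.
have KR : (K%:R : R) != 0 by rewrite pnatr_eq0 -lt0n.
have e1 : i%:R / (K ^ n.+1)%:R = ((i %/ k)%:R + (i %% k)%:R / k%:R) / K%:R :> R.
  rewrite {1}(divn_eq i k) expnS natrM natrD natrM -/k; field.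
  by apply/andP; split.
have e2 : i.+1%:R / (K ^ n.+1)%:R = ((i %/ k)%:R + (i %% k).+1%:R / k%:R) / K%:R :> R.
  rewrite -addn1 {1}(divn_eq i k) expnS natrM !natrD natrM -/k; field.
  by apply/andP; split.
have hu : forall m, (m <= k)%N -> 0 <= (m%:R / k%:R : R) <= 1.
  move=> m mk; apply/andP; split; first by apply: divr_ge0; rewrite ler0n.
  by rewrite ler_pdivrMr ?ltr0n // mul1r ler_nat.
rewrite e1 e2.
rewrite (cellpt _ _ hg jK (hu _ (ltnW i'k))) (cellpt _ _ hg jK (hu _ i'k)).
rewrite opprD addrACA subrr add0r -mulrBr exprS.
apply: ler_pM.
- exact: bC_ge0.
- rewrite subr_ge0; apply: G_mono; apply: ler_wpM2r; first by rewrite invr_ge0 ler0n.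
  by rewrite ler_nat.
- exact: (bC_le _ hg).
- exact: IH.
Qed.

Definition lv {R : realType} N n i : R := i%:R / (N ^ n)%:R.

Lemma lvE {R : realType} N a b c d : (0 < N)%N ->
  lv N (a + b) (c * N ^ b + d) = (c%:R + lv N b d) / (N ^ a)%:R :> R.
Proof.
move=> N0; rewrite /lv expnD !natrD !natrM.
have h1 : ((N ^ a)%:R : R) != 0 by rewrite pnatr_eq0 -lt0n expn_gt0 N0.
have h2 : ((N ^ b)%:R : R) != 0 by rewrite pnatr_eq0 -lt0n expn_gt0 N0.
field; by apply/andP.
Qed.

Lemma lv_up {R : realType} N a b k : (0 < N)%N ->
  lv N a k = lv N (a + b) (k * N ^ b) :> R.
Proof.
move=> N0; rewrite /lv expnD !natrM.
have h1 : ((N ^ a)%:R : R) != 0 by rewrite pnatr_eq0 -lt0n expn_gt0 N0.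
have h2 : ((N ^ b)%:R : R) != 0 by rewrite pnatr_eq0 -lt0n expn_gt0 N0.
field; by apply/andP.
Qed.

Lemma lv01 {R : realType} N n i : (0 < N)%N -> (i <= N ^ n)%N ->
  0 <= (lv N n i : R) <= 1.
Proof.
move=> N0 iN; apply/andP; split; first by apply: divr_ge0; rewrite ler0n.
by rewrite /lv ler_pdivrMr ?ltr0n ?expn_gt0 ?N0 // mul1r ler_nat.
Qed.

Lemma lv0 {R : realType} N n : lv N n 0 = 0 :> R.
Proof. by rewrite /lv mul0r. Qed.

Lemma lv1 {R : realType} N n : (0 < N)%N -> lv N n (N ^ n) = 1 :> R.
Proof. by move=> N0; rewrite /lv divff // pnatr_eq0 -lt0n expn_gt0 N0. Qed.

Lemma half {R : realType} N a1 a2 r B1 B2 (mu1 mu2 : probability R R) j k t :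
  (0 < N)%N -> good (N ^ a1) B1 mu1 -> good (N ^ a2) B2 mu2 ->
  (j < N ^ a1)%N -> (k < N ^ a2)%N -> (t <= N ^ r)%N ->
  G mu1 (lv N (a2 + r) (k * N ^ r + t)) = G mu2 (lv N (a2 + r) (k * N ^ r + t)) ->
  G mu1 (lv N (a1 + a2 + r) ((j * N ^ a2 + k) * N ^ r + t)) =
  aC (N ^ a1) B1 j + bC (N ^ a1) B1 j *
    (aC (N ^ a2) B2 k + bC (N ^ a2) B2 k * G mu2 (lv N r t)).
Proof.
move=> N0 g1 g2 jK kK tN hy.
have -> : ((j * N ^ a2 + k) * N ^ r + t = j * N ^ (a2 + r) + (k * N ^ r + t))%N.
  by rewrite mulnDl expnD mulnA addnA.
have kt : (k * N ^ r + t <= N ^ (a2 + r))%N.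
  apply: (@leq_trans (k.+1 * N ^ r)); first by rewrite mulSn [(N ^ r + _)%N]addnC leq_add2l.
  by rewrite expnD leq_mul2r kK orbT.
rewrite -addnA lvE // (cellpt _ _ g1 jK) ?lv01 // hy.
by rewrite lvE // (cellpt _ _ g2 kK) ?lv01.
Qed.

Lemma idx_bound N a r k t : (k < N ^ a)%N -> (t <= N ^ r)%N ->
  (k * N ^ r + t <= N ^ (a + r))%N.
Proof.
move=> kK tN.
apply: (@leq_trans (k.+1 * N ^ r)); first by rewrite mulSn [(N ^ r + _)%N]addnC leq_add2l.
by rewrite expnD leq_mul2r kK orbT.
Qed.

Lemma alg {R : realType} (a b c d a' b' c' d' g : R) :
  a + b * (c + d * 0) = a' + b' * (c' + d' * 0) ->
  a + b * (c + d * 1) = a' + b' * (c' + d' * 1) ->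
  a + b * (c + d * g) = a' + b' * (c' + d' * g).
Proof.
rewrite !mulr0 !addr0 !mulr1 !mulrDr => h0 h1.
have hbd : b * d = b' * d' by lra.
by rewrite !mulrA hbd; lra.
Qed.

Lemma dyadic {R : realType} N L M BL BM (muL muM : probability R R) :
  (0 < N)%N -> (0 < L)%N -> (0 < M)%N ->
  good (N ^ L) BL muL -> good (N ^ M) BM muM ->
  (forall m, (m <= N ^ (L + M))%N ->
     G muL (lv N (L + M) m) = G muM (lv N (L + M) m)) ->
  forall n i, (i <= N ^ n)%N -> G muL (lv N n i) = G muM (lv N n i).
Proof.
move=> N0 L0 M0 gL gM Hg n; elim/ltn_ind: n => n IH i iN.
have Np : forall e, (0 < N ^ e)%N by move=> e; rewrite expn_gt0 N0.
case: (leqP n (L + M)) => hn.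
  rewrite (lv_up _ n (L + M - n) i N0) subnKC //; apply: Hg.
  rewrite -{2}(subnKC hn) expnD; exact: leq_mul.
set r := (n - (L + M))%N.
have en : n = (L + M + r)%N by rewrite subnKC // ltnW.
case: (ltnP i (N ^ n)) => [ilt | ige]; last first.
  have -> : i = (N ^ n)%N by apply/eqP; rewrite eqn_leq iN ige.
  by rewrite lv1 // (G_1 gL) (G_1 gM).
set m0 := (i %/ N ^ r)%N.
set t0 := (i %% N ^ r)%N.
have ei : i = (m0 * N ^ r + t0)%N by rewrite /m0 /t0 -divn_eq.
have m0P : (m0 < N ^ (L + M))%N by rewrite ltn_divLR // -expnD -en.
have DL : forall t, (t <= N ^ r)%N ->
  G muL (lv N n (m0 * N ^ r + t)) =
  aC (N ^ L) BL (m0 %/ N ^ M) + bC (N ^ L) BL (m0 %/ N ^ M) *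
    (aC (N ^ M) BM (m0 %% N ^ M) + bC (N ^ M) BM (m0 %% N ^ M) * G muM (lv N r t)).
  move=> t tN; rewrite en {1}(divn_eq m0 (N ^ M)).
  apply: half => //.
  - by rewrite ltn_divLR // -expnD.
  - by rewrite ltn_pmod.
  - apply: IH; last by apply: idx_bound => //; rewrite ltn_pmod.
    by lia.
have DM : forall t, (t <= N ^ r)%N ->
  G muM (lv N n (m0 * N ^ r + t)) =
  aC (N ^ M) BM (m0 %/ N ^ L) + bC (N ^ M) BM (m0 %/ N ^ L) *
    (aC (N ^ L) BL (m0 %% N ^ L) + bC (N ^ L) BL (m0 %% N ^ L) * G muL (lv N r t)).
  move=> t tN; rewrite en [(L + M)%N]addnC {1}(divn_eq m0 (N ^ L)).
  apply: half => //.
  - by rewrite ltn_divLR // -expnD addnC.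
  - by rewrite ltn_pmod.
  - apply/esym/IH; last by apply: idx_bound => //; rewrite ltn_pmod.
    by lia.
have Ir : G muL (lv N r t0) = G muM (lv N r t0).
  apply: IH; last by rewrite ltnW // ltn_pmod.
  by lia.
have ILM : forall m, (m <= N ^ (L + M))%N ->
    G muL (lv N n (m * N ^ r)) = G muM (lv N n (m * N ^ r)).
  move=> m mP; rewrite en -lv_up //; apply: IH => //.
have t0r : (t0 <= N ^ r)%N by rewrite ltnW // ltn_pmod.
rewrite ei (DL _ t0r) (DM _ t0r) Ir.
apply: alg.
- have := ILM m0 (ltnW m0P).
  by rewrite -[(m0 * N ^ r)%N]addn0 (DL 0) // (DM 0) // lv0 (G_0 gL) (G_0 gM).
- have := ILM m0.+1 m0P.
  by rewrite mulSn addnC (DL _ (leqnn _)) (DM _ (leqnn _)) lv1 // (G_1 gL) (G_1 gM).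
Qed.

Lemma cdfBE {R : realType} {K B} {mu : probability R R} x : good K B mu ->
  0 <= x -> cdfB mu x = (G mu x)%:E.
Proof.
move=> hg x0; rewrite /cdfB -GE.
have -> : `]-oo, x] = `]-oo, 0[ `|` `[0, x] :> set R.
  apply/seteqP; split => y /=; rewrite !in_itv /=.
  - by move=> yx; case: (ltP y 0) => y0; [left | right; apply/andP].
  - by case=> [/ltW y0 | /andP[_ //]]; apply: le_trans x0.
rewrite measureU //; last first.
  apply/seteqP; split => y //= [/[!in_itv] /= y0 /andP[y0' _]].
  by move: y0; rewrite ltNge y0'.
rewrite -[LHS]add0e; congr (_ + _)%E; apply/esym.
apply/eqP; rewrite eq_le measure_ge0 andbT.
rewrite (@le_trans _ _ (mu `]-oo, 0])) //; last by rewrite GE (G_0 hg).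
apply: le_measure; rewrite ?inE //; apply: subitvPr; by rewrite bnd_simp.
Qed.

Lemma squeeze {R : realType} (e : R) : (forall n, `|e| <= 2^-1 ^+ n) -> e = 0.
Proof.
move=> h; apply/eqP; apply: contraT => ne.
have pos : 0 < `|e| by rewrite normr_gt0.
have [n hn] := @bigpow R 2 (`|e|^-1) isT.
have h2 : `|e| * 2 ^+ n <= 1.
  by rewrite -ler_pdivlMr ?exprn_gt0 // div1r -exprVn; apply: h.
rewrite -[`|e|^-1]div1r ltr_pdivrMr // in hn.
by move: h2; rewrite mulrC leNgt hn.
Qed.

Lemma final {R : realType} N L M BL BM (muL muM : probability R R) :
  (0 < N)%N -> (0 < L)%N -> (0 < M)%N ->
  good (N ^ L) BL muL -> good (N ^ M) BM muM ->
  (forall n i, (i <= N ^ n)%N -> G muL (lv N n i) = G muM (lv N n i)) ->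
  forall x : R, 0 <= x <= 1 -> G muL x = G muM x.
Proof.
move=> N0 L0 M0 gL gM D x /andP[x0 x1].
case: (x =P 1) => [-> | /eqP xn1]; first by rewrite (G_1 gL) (G_1 gM).
have xl1 : x < 1 by rewrite lt_neqAle xn1 x1.
apply/subr0_eq/squeeze => n.
set e := (L * (M * n))%N.
have Qp : (0 < N ^ e)%N by rewrite expn_gt0 N0.
have QR : (0 : R) < (N ^ e)%:R by rewrite ltr0n.
set i := Num.trunc (x * (N ^ e)%:R).
have /andP[hi1 hi2] : i%:R <= x * (N ^ e)%:R < i.+1%:R.
  by apply: trunc_itv; apply: mulr_ge0 => //; rewrite ler0n.
have iQ : (i < N ^ e)%N.
  rewrite -(ltr_nat R); apply: (le_lt_trans hi1).
  by rewrite -[X in _ < X]mul1r ltr_pM2r.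
have lo : lv N e i <= x by rewrite /lv ler_pdivrMr.
have hi : x <= lv N e i.+1 by rewrite /lv ler_pdivlMr // ltW.
have DL : G muL (lv N e i.+1) - G muL (lv N e i) <= 2^-1 ^+ n.
  have iQL : (i < (N ^ L) ^ (M * n))%N by rewrite -expnM.
  have := incr gL _ _ iQL.
  rewrite -!expnM -/e => h; apply: (le_trans h).
  by apply: ler_wiXn2l => //; [lra | rewrite leq_pmull].
have DM : G muM (lv N e i.+1) - G muM (lv N e i) <= 2^-1 ^+ n.
  have eM : e = (M * (L * n))%N by rewrite /e mulnCA.
  have iQ' : (i < (N ^ M) ^ (L * n))%N by rewrite -expnM -eM.
  have := incr gM _ _ iQ'.
  rewrite -!expnM -eM => h; apply: (le_trans h).
  by apply: ler_wiXn2l => //; [lra | rewrite leq_pmull].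
have a1 := G_mono _ muL _ _ lo; have a2 := G_mono _ muL _ _ hi.
have b1 := G_mono _ muM _ _ lo; have b2 := G_mono _ muM _ _ hi.
rewrite (D _ _ (ltnW iQ)) in a1 DL; rewrite (D _ _ iQ) in a2 DL.
rewrite ler_norml; apply/andP; split; lra.
Qed.

Lemma dv_good {R : realType} K B (mu : probability R R) :
  digit_vector K B -> selfsim K B mu -> good K B mu.
Proof. by case/and4P => K3 /eqP sz c2 _ hs; split => //; apply: ltnW. Qed.

Theorem proposition2p6 (R : realType) (L M N : nat)
  (BL BM : seq bool)
  (hBL : digit_vector (N ^ L) BL) (hBM : digit_vector (N ^ M) BM)
  (muL muM : probability R R)
  (hmuL : selfsim (N ^ L) BL muL) (hmuM : selfsim (N ^ M) BM muM) :
  (forall m : nat, (1 <= m <= (N ^ (L + M)).-1)%N ->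
     cdfB muL (m%:R / (N ^ (L + M))%:R) = cdfB muM (m%:R / (N ^ (L + M))%:R))
  <->
  (forall x : R, 0 <= x <= 1 -> cdfB muL x = cdfB muM x).
Proof.
have gL := dv_good _ _ _ hBL hmuL; have gM := dv_good _ _ _ hBM hmuM.
have K3L : (3 <= N ^ L)%N by case/and4P: hBL.
have K3M : (3 <= N ^ M)%N by case/and4P: hBM.
have N0 : (0 < N)%N.
  rewrite lt0n; apply/eqP => N0; move: K3L; rewrite N0.
  by case: (posnP L) => [->|/exp0n ->].
have L0 : (0 < L)%N by rewrite lt0n; apply/eqP => L0; move: K3L; rewrite L0 expn0.
have M0 : (0 < M)%N by rewrite lt0n; apply/eqP => M0; move: K3M; rewrite M0 expn0.
have P0 : (0 < N ^ (L + M))%N by rewrite expn_gt0 N0.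
split => [H x /andP[x0 x1] | H m /andP[m1 mP]].
  rewrite (cdfBE _ gL x0) (cdfBE _ gM x0); congr (_%:E).
  apply: (@final R N L M BL BM muL muM N0 L0 M0 gL gM _ x); last by apply/andP.
  apply: (@dyadic R N L M BL BM muL muM N0 L0 M0 gL gM) => m mP.
  case: (posnP m) => [-> | m0]; first by rewrite lv0 (G_0 gL) (G_0 gM).
  case: (m =P N ^ (L + M))%N => [-> | /eqP mn]; first by rewrite lv1 // (G_1 gL) (G_1 gM).
  have /andP[l0 _] := @lv01 R N (L + M) m N0 mP.
  have e : cdfB muL (lv N (L + M) m) = cdfB muM (lv N (L + M) m).
    by apply: H; rewrite m0 /= -ltnS prednK // ltn_neqAle mn.
  by move: e; rewrite (cdfBE _ gL l0) (cdfBE _ gM l0); case.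
apply: H; have := @lv01 R N (L + M) m N0.
by apply; apply: (leq_trans mP); apply: leq_pred.
Qed.
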